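(* (Soundness.) For every finite multiset $\Gamma$ of formulae of intuitionistic linear logic and every formula $\varphi$: if $\Gamma \vdash \varphi$ is derivable in the natural deduction system $\mathrm{N_{ILL}}$, then the sequent $(\Gamma:\varphi)$ is valid, i.e. $\Gamma \Vdash^{\varnothing}_{\mathcal{B}} \varphi$ for every base $\mathcal{B}$.
   Context: Fix a set $\mathbb{A}$ of propositional atoms. ILL formulae: $\phi ::= p\in\mathbb{A} \mid \top \mid 0 \mid 1 \mid \phi\multimap\phi \mid \phi\otimes\phi \mid \phi\,\&\,\phi \mid \phi\oplus\phi \mid\ !\phi$. All multisets are finite; ''$\Gamma,\Delta$'' denotes multiset union. Natural deduction $\mathrm{N_{ILL}}$: $\Gamma\vdash\varphi$ is defined inductively by: (Ax) $\varphi\vdash\varphi$; ($\multimap$I) from $\Gamma,\phi\vdash\psi$ infer $\Gamma\vdash\phi\multimap\psi$; ($\multimap$E) from $\Gamma\vdash\phi\multimap\psi$ and $\Delta\vdash\phi$ infer $\Gamma,\Delta\vdash\psi$; ($\otimes$I) from $\Gamma\vdash\phi$, $\Delta\vdash\psi$ infer $\Gamma,\Delta\vdash\phi\otimes\psi$; ($\otimes$E) from $\Gamma\vdash\phi\otimes\psi$ and $\Delta,\phi,\psi\vdash\chi$ infer $\Gamma,\Delta\vdash\chi$; ($1$I) $\vdash 1$; ($1$E) from $\Gamma\vdash 1$, $\Delta\vdash\phi$ infer $\Gamma,\Delta\vdash\phi$; ($\&$I) from $\Gamma\vdash\phi$, $\Gamma\vdash\psi$ infer $\Gamma\vdash\phi\&\psi$;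 ($\&$E) from $\Gamma\vdash\phi\&\psi$ infer $\Gamma\vdash\phi$ and infer $\Gamma\vdash\psi$; ($\oplus$I) from $\Gamma\vdash\phi$ (or $\Gamma\vdash\psi$) infer $\Gamma\vdash\phi\oplus\psi$; ($\oplus$E) from $\Gamma\vdash\phi\oplus\psi$, $\Delta,\phi\vdash\chi$, $\Delta,\psi\vdash\chi$ infer $\Gamma,\Delta\vdash\chi$; ($\top$I) for $n\ge0$, from $\Gamma_i\vdash\phi_i$ ($i=1..n$) infer $\Gamma_1,\dots,\Gamma_n\vdash\top$; ($0$E) for $n\ge 0$, from $\Gamma_i\vdash\phi_i$ ($i=1..n$) and $\Delta\vdash 0$ infer $\Gamma_1,\dots,\Gamma_n,\Delta\vdash\chi$; (Prom$_n$) for $n\ge0$, from $\Gamma_i\vdash\,!\psi_i$ ($i=1..n$) and $!\psi_1,\dots,!\psi_n\vdash\phi$ infer $\Gamma_1,\dots,\Gamma_n\vdash\,!\phi$; (Der) from $\Gamma\vdash\,!\phi$, $\Delta,\phi\vdash\psi$ infer $\Gamma,\Delta\vdash\psi$; (Wk) from $\Gamma\vdash\,!\phi$, $\Delta\vdash\psi$ infer $\Gamma,\Delta\vdash\psi$; (Ctr) from $\Gamma\vdash\,!\phi$, $\Delta,!\phi,!\phi\vdash\psi$ infer $\Gamma,\Delta\vdash\psi$. Atomic rules and bases: an atomic sequent is $P\Rightarrow p$ with $P$ a multiset of atoms, $p$ an atom. An atomic box is a multiset of atomic sequents. An atomic rule is a triple $\langle\mathbf{A},\mathbf{S},p\rangle$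 with $\mathbf{A}$ a multiset of atomic boxes, $\mathbf{S}$ an atomic box, $p$ an atom. A base is a set of atomic rules. An atom $p$ is persistent in $\mathcal{B}$ if some $\langle\varnothing,\mathbf{S},p\rangle\in\mathcal{B}$ has $\mathbf{S}\neq\varnothing$. Derivability $\vdash_{\mathcal{B}}$ between atomic multisets and atoms is defined inductively: (Ref) $p\vdash_{\mathcal{B}}p$; (App) if $\langle\mathbf{A},\mathbf{S},p\rangle\in\mathcal{B}$ with $\mathbf{A}=\{\mathbf{T}_1,\dots,\mathbf{T}_m\}$, and there are atomic multisets $C_1,\dots,C_n$ ($n\ge m$) and a multiset $D=\{d_{m+1},\dots,d_n\}$ of atoms persistent in $\mathcal{B}$ such that $C_i,Q\vdash_{\mathcal{B}}q$ for every $i\le m$ and every $Q\Rightarrow q\in\mathbf{T}_i$, $C_j\vdash_{\mathcal{B}}d_j$ for every $m<j\le n$, and $D,U\vdash_{\mathcal{B}}v$ for every $U\Rightarrow v\in\mathbf{S}$, then $C_1,\dots,C_n\vdash_{\mathcal{B}}p$. Support $\Vdash^L_{\mathcal{B}}$ (base $\mathcal{B}$, atomic multiset $L$), defined by induction on formulae: $\Vdash^L_{\mathcal{B}}p$ iff $L\vdash_{\mathcal{B}}p$; $\Vdash^L_{\mathcal{B}}\varphi\multimap\psi$ iff $\varphi\Vdash^L_{\mathcal{B}}\psi$; $\Vdash^L_{\mathcal{B}}\varphi\otimes\psi$ iff for all $\mathcal{C}\supseteq\mathcal{B}$, atomic multisets $K$, atoms $p$: if $\varphi,\psi\Vdash^K_{\mathcal{C}}p$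 then $\Vdash^{L,K}_{\mathcal{C}}p$; $\Vdash^L_{\mathcal{B}}1$ iff for all $\mathcal{C}\supseteq\mathcal{B}$, $K$, $p$: if $\Vdash^K_{\mathcal{C}}p$ then $\Vdash^{L,K}_{\mathcal{C}}p$; $\Vdash^L_{\mathcal{B}}\varphi\&\psi$ iff $\Vdash^L_{\mathcal{B}}\varphi$ and $\Vdash^L_{\mathcal{B}}\psi$; $\Vdash^L_{\mathcal{B}}\varphi\oplus\psi$ iff for all $\mathcal{C}\supseteq\mathcal{B}$, $K$, $p$: if $\varphi\Vdash^K_{\mathcal{C}}p$ and $\psi\Vdash^K_{\mathcal{C}}p$ then $\Vdash^{L,K}_{\mathcal{C}}p$; $\Vdash^L_{\mathcal{B}}0$ iff $\Vdash^{L,K}_{\mathcal{B}}p$ for all atoms $p$ and atomic multisets $K$; $\Vdash^L_{\mathcal{B}}\top$ always; $\Vdash^L_{\mathcal{B}}!\varphi$ iff for all $\mathcal{C}\supseteq\mathcal{B}$, $K$, $p$: if (for all $\mathcal{D}\supseteq\mathcal{C}$, $\Vdash^{\varnothing}_{\mathcal{D}}\varphi$ implies $\Vdash^K_{\mathcal{D}}p$) then $\Vdash^{L,K}_{\mathcal{C}}p$. For nonempty multisets: $\Vdash^L_{\mathcal{B}}\Gamma,\Delta$ iff $L=K,M$ for some $K,M$ with $\Vdash^K_{\mathcal{B}}\Gamma$ and $\Vdash^M_{\mathcal{B}}\Delta$. For a nonempty antecedent written as $!\Delta,\Theta$, where $!\Delta$ collects the formulae whose top-level connective is $!$ (with $\Delta$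 the formulae under those $!$) and $\Theta$ contains none: $!\Delta,\Theta\Vdash^L_{\mathcal{B}}\varphi$ iff for all $\mathcal{C}\supseteq\mathcal{B}$ and atomic $K$, if $\Vdash^{\varnothing}_{\mathcal{C}}\delta$ for every $\delta\in\Delta$ and $\Vdash^K_{\mathcal{C}}\Theta$ then $\Vdash^{L,K}_{\mathcal{C}}\varphi$ (when $\Theta$ is empty, $K$ is empty). An empty antecedent: $\varnothing\Vdash^L_{\mathcal{B}}\varphi$ means $\Vdash^L_{\mathcal{B}}\varphi$. A sequent $(\Gamma:\varphi)$ is valid, written $\Gamma\Vdash\varphi$, iff $\Gamma\Vdash^{\varnothing}_{\mathcal{B}}\varphi$ for all bases $\mathcal{B}$. *)

(* Defs.v *)
(* Multisets are represented by lists, taken up to permutation. *)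
From Stdlib Require Import List Permutation.
Import ListNotations.
Set Implicit Arguments.

Section ILL.
Variable A : Type.

Inductive formula : Type :=
| Atom : A -> formula
| Top : formula
| Zero : formula
| One : formula
| Lolli : formula -> formula -> formula
| Tensor : formula -> formula -> formula
| With : formula -> formula -> formula
| Plus : formula -> formula -> formula
| Bang : formula -> formula.

Inductive nd : list formula -> formula -> Prop :=
| nd_perm G G' f : Permutation G G' -> nd G f -> nd G' f
| nd_ax f : nd [f] f
| nd_lolliI G f g : nd (f :: G) g -> nd G (Lolli f g)
| nd_lolliE G D f g : nd G (Lolli f g) -> nd D f -> nd (G ++ D) g
| nd_tensorI G D f g : nd G f -> nd D g -> nd (G ++ D) (Tensor f g)
| nd_tensorE G D f g h : nd G (Tensor f g) -> nd (f :: g :: D) h -> nd (G ++ D) h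
| nd_oneI : nd [] One
| nd_oneE G D f : nd G One -> nd D f -> nd (G ++ D) f
| nd_withI G f g : nd G f -> nd G g -> nd G (With f g)
| nd_withE1 G f g : nd G (With f g) -> nd G f
| nd_withE2 G f g : nd G (With f g) -> nd G g
| nd_plusI1 G f g : nd G f -> nd G (Plus f g)
| nd_plusI2 G f g : nd G g -> nd G (Plus f g)
| nd_plusE G D f g h : nd G (Plus f g) -> nd (f :: D) h -> nd (g :: D) h -> nd (G ++ D) h
| nd_topI (ps : list (list formula * formula)) :
    Forall (fun p => nd (fst p) (snd p)) ps -> nd (concat (map fst ps)) Top
| nd_zeroE (ps : list (list formula * formula)) D h :
    Forall (fun p => nd (fst p) (snd p)) ps -> nd D Zero ->
    nd (concat (map fst ps) ++ D) h
| nd_prom (ps : list (list formula * formula)) f :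
    Forall (fun p => nd (fst p) (Bang (snd p))) ps ->
    nd (map (fun p => Bang (snd p)) ps) f ->
    nd (concat (map fst ps)) (Bang f)
| nd_der G D f g : nd G (Bang f) -> nd (f :: D) g -> nd (G ++ D) g
| nd_wk G D f g : nd G (Bang f) -> nd D g -> nd (G ++ D) g
| nd_ctr G D f g : nd G (Bang f) -> nd (Bang f :: Bang f :: D) g -> nd (G ++ D) g.

Definition asequent : Type := (list A * A)%type.
Definition abox : Type := list asequent.
Definition arule : Type := (list abox * abox * A)%type.
Definition base : Type := arule -> Prop.

Definition extends (B C : base) : Prop := forall r, B r -> C r.

Definition persistent (B : base) (p : A) : Prop :=
  exists S, B ([], S, p) /\ S <> [].

Inductive deriv (B : base) : list A -> A -> Prop :=
| deriv_ref L p : Permutation L [p] -> deriv B L p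
| deriv_app (As : list abox) (S : abox) (p : A)
    (CA CD : list (list A)) (ds : list A) (L : list A) :
    B (As, S, p) ->
    Forall2 (fun T C => forall Q q, In (Q, q) T -> deriv B (C ++ Q) q) As CA ->
    Forall2 (fun C d => deriv B C d) CD ds ->
    Forall (persistent B) ds ->
    (forall U v, In (U, v) S -> deriv B (ds ++ U) v) ->
    Permutation L (concat CA ++ concat CD) ->
    deriv B L p.

Fixpoint supp (f : formula) (B : base) (L : list A) {struct f} : Prop :=
  match f with
  | Atom p => deriv B L p
  | Lolli f1 f2 =>
      (* f1 ||-^L_B f2 *)
      forall C, extends B C -> forall K,
        match f1 with
        | Bang d => K = [] /\ supp d C []
        | _ => supp f1 C K
        end -> supp f2 C (L ++ K)
  | Tensor f1 f2 =>
      forall C K p, extends B C ->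
        (* f1, f2 ||-^K_C p *)
        (forall D, extends C D -> forall K',
           match f1, f2 with
           | Bang d1, Bang d2 => K' = [] /\ supp d1 D [] /\ supp d2 D []
           | Bang d1, _ => supp d1 D [] /\ supp f2 D K'
           | _, Bang d2 => supp f1 D K' /\ supp d2 D []
           | _, _ => exists K1 K2, Permutation K' (K1 ++ K2) /\
                                   supp f1 D K1 /\ supp f2 D K2
           end -> deriv D (K ++ K') p) ->
        deriv C (L ++ K) p
  | One => forall C K p, extends B C -> deriv C K p -> deriv C (L ++ K) p
  | With f1 f2 => supp f1 B L /\ supp f2 B L
  | Plus f1 f2 =>
      forall C K p, extends B C ->
        (* f1 ||-^K_C p *)
        (forall D, extends C D -> forall K',
           match f1 with
           | Bang d => K' = [] /\ supp d D []
           | _ => supp f1 D K'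
           end -> deriv D (K ++ K') p) ->
        (* f2 ||-^K_C p *)
        (forall D, extends C D -> forall K',
           match f2 with
           | Bang d => K' = [] /\ supp d D []
           | _ => supp f2 D K'
           end -> deriv D (K ++ K') p) ->
        deriv C (L ++ K) p
  | Zero => forall p K, deriv B (L ++ K) p
  | Top => True
  | Bang f1 =>
      forall C K p, extends B C ->
        (forall D, extends C D -> supp f1 D [] -> deriv D K p) ->
        deriv C (L ++ K) p
  end.

Definition is_bang (f : formula) : bool :=
  match f with Bang _ => true | _ => false end.

Fixpoint supp_ms (Th : list formula) (B : base) (K : list A) : Prop :=
  match Th with
  | [] => K = []
  | [t] => supp t B K
  | t :: Th' => exists K1 K2, Permutation K (K1 ++ K2) /\
                              supp t B K1 /\ supp_ms Th' B K2
  end.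

Definition seq_supp (G : list formula) (B : base) (L : list A) (f : formula) : Prop :=
  match G with
  | [] => supp f B L
  | _ => forall C, extends B C -> forall K,
           (forall d, In (Bang d) G -> supp d C []) ->
           supp_ms (filter (fun g => negb (is_bang g)) G) C K ->
           supp f C (L ++ K)
  end.

Definition valid (G : list formula) (f : formula) : Prop :=
  forall B : base, seq_supp G B [] f.

End ILL.

(* Main.v *)
Require Import Defs.
From Stdlib Require Import List Permutation.
Import ListNotations.
Set Implicit Arguments.

Section S.
Variable A : Type.
Notation fm := (formula A).
Notation bs := (base A).

Lemma ext_refl (B : bs) : extends B B. Proof. intros r h; exact h. Qed.
Lemma ext_trans (B C D : bs) : extends B C -> extends C D -> extends B D.
Proof. intros h1 h2 r h; auto. Qed.

Lemma deriv_perm (B : bs) L L' p : deriv B L p -> Permutation L L' -> deriv B L' p.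
Proof.
  intros d HP. inversion d; subst.
  - apply deriv_ref. eapply Permutation_trans; [symmetry; exact HP|assumption].
  - eapply deriv_app; eauto. eapply Permutation_trans; [symmetry; exact HP|eassumption].
Qed.
Arguments deriv_perm {B L L' p}.


Fixpoint deriv_mono (B C : bs) (H : extends B C) L p (d : deriv B L p) {struct d} : deriv C L p.
Proof.
  destruct d as [L p Hr | As S p CA CD ds L HB HA HD HP HS HL].
  - apply deriv_ref; exact Hr.
  - apply deriv_app with (As:=As) (S:=S) (CA:=CA) (CD:=CD) (ds:=ds).
    + exact (H _ HB).
    + clear - deriv_mono H HA. revert As CA HA. fix F 3. intros As CA HA.
      destruct HA as [|T C0 As' CA' h HA']; constructor.
      * intros Q q i. apply (deriv_mono B C H). apply h. exact i.
      * apply F. exact HA'.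
    + clear - deriv_mono H HD. revert CD ds HD. fix F 3. intros CD ds HD.
      destruct HD as [|C0 d0 CD' ds' h HD']; constructor.
      * apply (deriv_mono B C H). exact h.
      * apply F. exact HD'.
    + revert HP. apply Forall_impl. intros a [S0 [h1 h2]]. exists S0. split; auto.
    + intros U v i. apply (deriv_mono B C H). apply HS. exact i.
    + exact HL.
Qed.
Arguments deriv_mono {B C} H {L p} d.


Lemma supp_perm (f : fm) : forall B L L', supp f B L -> Permutation L L' -> supp f B L'.
Proof.
  induction f; intros B L L' H HP; simpl in *.
  - eapply deriv_perm; eauto.
  - exact I.
  - intros p K. eapply deriv_perm; [apply H| apply Permutation_app_tail; exact HP].
  - intros C K p HC Hd. eapply deriv_perm; [apply H; eauto | apply Permutation_app_tail; auto].
  - intros C HC K HK. eapply IHf2; [apply H; eauto| apply Permutation_app_tail; auto].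
  - intros C K p HC HK. eapply deriv_perm; [apply H; eauto| apply Permutation_app_tail; auto].
  - destruct H; split; eauto.
  - intros C K p HC HK1 HK2. eapply deriv_perm; [apply H; eauto| apply Permutation_app_tail; auto].
  - intros C K p HC HK. eapply deriv_perm; [apply H; eauto| apply Permutation_app_tail; auto].
Qed.
Arguments supp_perm {f B L L'}.


Lemma supp_mono (f : fm) : forall B C L, extends B C -> supp f B L -> supp f C L.
Proof.
  induction f; intros B C L HBC H; simpl in *.
  - eapply deriv_mono; eauto.
  - exact I.
  - intros p K. eapply deriv_mono; eauto.
  - intros C' K p HC Hd. apply H; auto. eapply ext_trans; eauto.
  - intros C' HC K HK. apply H; auto. eapply ext_trans; eauto.
  - intros C' K p HC HK. apply H; auto. eapply ext_trans; eauto.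
  - destruct H; split; eauto.
  - intros C' K p HC HK1 HK2. apply H; auto. eapply ext_trans; eauto.
  - intros C' K p HC HK. apply H; auto. eapply ext_trans; eauto.
Qed.
Arguments supp_mono {f B C L}.


Definition asupp (f : fm) (B : bs) (K : list A) : Prop :=
  match f with Bang d => K = [] /\ supp d B [] | _ => supp f B K end.

Lemma asupp_perm (f : fm) (B : bs) K K' : asupp f B K -> Permutation K K' -> asupp f B K'.
Proof.
  intros H HP. destruct f; unfold asupp in *; cbv beta iota in *; try exact (supp_perm H HP).
  destruct H as [-> H]. split; auto. apply Permutation_nil; exact HP.
Qed.
Arguments asupp_perm {f B K K'}.


Lemma asupp_mono (f : fm) (B C : bs) K : extends B C -> asupp f B K -> asupp f C K.
Proof.
  intros HC H. destruct f; unfold asupp in *; cbv beta iota in *; try exact (supp_mono HC H).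
  destruct H as [-> H]. split; auto. eapply supp_mono; eauto.
Qed.
Arguments asupp_mono {f B C K}.


Lemma bang_intro (f : fm) (C : bs) : supp f C [] -> supp (Bang f) C [].
Proof.
  intros H C' K p HC Hk. simpl. apply Hk. apply ext_refl. eapply supp_mono; eauto.
Qed.

Lemma asupp_supp (f : fm) (C : bs) K : asupp f C K -> supp f C K.
Proof.
  intros H. destruct f; try exact H. destruct H as [-> H]. apply bang_intro; auto.
Qed.

Definition tcm (f1 f2 : fm) (D : bs) (K' : list A) : Prop :=
  match f1, f2 with
  | Bang d1, Bang d2 => K' = [] /\ supp d1 D [] /\ supp d2 D []
  | Bang d1, _ => supp d1 D [] /\ supp f2 D K'
  | _, Bang d2 => supp f1 D K' /\ supp d2 D []
  | _, _ => exists K1 K2, Permutation K' (K1 ++ K2) /\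
                          supp f1 D K1 /\ supp f2 D K2
  end.

Definition tc (f1 f2 : fm) (D : bs) (K' : list A) : Prop :=
  exists K1 K2, Permutation K' (K1 ++ K2) /\ asupp f1 D K1 /\ asupp f2 D K2.

Lemma tc_iff (f g : fm) (D : bs) K' : tcm f g D K' <-> tc f g D K'.
Proof.
  unfold tcm, tc.
  destruct f, g; unfold asupp; cbv beta iota; split; intro H;
  first
  [ exact H
  | destruct H as [-> [h1 h2]]; exists [], [];
      split; [apply Permutation_refl| split; split; auto]
  | destruct H as [K1 [K2 [Hp [[-> h1] [-> h2]]]]]; simpl in Hp;
      split; [apply Permutation_nil; symmetry; exact Hp| split; auto]
  | destruct H as [h1 h2]; exists [], K';
      split; [apply Permutation_refl| split; [split; [reflexivity|exact h1]| exact h2]]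
  | destruct H as [K1 [K2 [Hp [[-> h1] h2]]]]; split; [exact h1|];
      eapply supp_perm; [exact h2| simpl in Hp; symmetry; exact Hp]
  | destruct H as [h1 h2]; exists K', []; rewrite app_nil_r;
      split; [apply Permutation_refl| split; [exact h1| split; [reflexivity|exact h2]]]
  | destruct H as [K1 [K2 [Hp [h1 [-> h2]]]]]; split; [|exact h2];
      eapply supp_perm; [exact h1| rewrite app_nil_r in Hp; symmetry; exact Hp] ].
Qed.

Definition elim (P : bs -> list A -> Prop) (B : bs) (K : list A) : Prop :=
  forall C, extends B C -> forall M p,
    (forall D, extends C D -> forall K', P D K' -> deriv D (M ++ K') p) ->
    deriv C (K ++ M) p.

Lemma elim_mono P (B C : bs) K : elim P B K -> extends B C -> elim P C K.
Proof. intros H HC C' HC'. apply H. eapply ext_trans; eauto. Qed.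

Lemma perm3 (L K' M : list A) : Permutation ((L ++ K') ++ M) ((L ++ M) ++ K').
Proof.
  rewrite <- !app_assoc. apply Permutation_app_head. apply Permutation_app_comm.
Qed.

Lemma lift (chi : fm) : forall B K L P, elim P B K ->
  (forall D, extends B D -> forall K', P D K' -> supp chi D (L ++ K')) ->
  supp chi B (K ++ L).
Proof.
  induction chi; intros B K L P HE HC.
  - apply HE; [apply ext_refl|]. intros D HD K' HP. exact (HC D HD K' HP).
  - exact I.
  - intros p M. simpl. rewrite <- app_assoc. apply HE; [apply ext_refl|].
    intros D HD K' HP. pose proof (HC D HD K' HP) as H1. simpl in H1.
    eapply deriv_perm; [apply (H1 p M)| apply perm3].
  - intros C M p HC' Hd. rewrite <- app_assoc. apply (HE C HC' (L ++ M) p).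
    intros D HD K' HP. pose proof (HC D (ext_trans HC' HD) K' HP) as H1. simpl in H1.
    eapply deriv_perm; [apply (H1 D M p (ext_refl D) (deriv_mono HD Hd))| apply perm3].
  - change (forall C, extends B C -> forall M, asupp chi1 C M -> supp chi2 C ((K ++ L) ++ M)).
    intros C HC' M HM. rewrite <- app_assoc. apply IHchi2 with P.
    + eapply elim_mono; eauto.
    + intros D HD K' HP. pose proof (HC D (ext_trans HC' HD) K' HP) as H1.
      change (forall C, extends D C -> forall M, asupp chi1 C M -> supp chi2 C ((L ++ K') ++ M)) in H1.
      eapply supp_perm; [apply (H1 D (ext_refl D) M (asupp_mono HD HM)) | apply perm3].
  - intros C M p HC' Hk. rewrite <- app_assoc. apply (HE C HC' (L ++ M) p).
    intros D HD K' HP. pose proof (HC D (ext_trans HC' HD) K' HP) as H1. simpl in H1.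
    eapply deriv_perm; [|apply perm3]. apply (H1 D M p (ext_refl D)).
    intros E HE' K'' Hc. apply Hk; [eapply ext_trans; eauto | exact Hc].
  - split.
    + apply IHchi1 with P; auto. intros D HD K' HP. apply (HC D HD K' HP).
    + apply IHchi2 with P; auto. intros D HD K' HP. apply (HC D HD K' HP).
  - intros C M p HC' Hk1 Hk2. rewrite <- app_assoc. apply (HE C HC' (L ++ M) p).
    intros D HD K' HP. pose proof (HC D (ext_trans HC' HD) K' HP) as H1. simpl in H1.
    eapply deriv_perm; [|apply perm3]. apply (H1 D M p (ext_refl D)).
    + intros E HE' K'' Hc. apply Hk1; [eapply ext_trans; eauto | exact Hc].
    + intros E HE' K'' Hc. apply Hk2; [eapply ext_trans; eauto | exact Hc].
  - intros C M p HC' Hk. rewrite <- app_assoc. apply (HE C HC' (L ++ M) p).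
    intros D HD K' HP. pose proof (HC D (ext_trans HC' HD) K' HP) as H1. simpl in H1.
    eapply deriv_perm; [|apply perm3]. apply (H1 D M p (ext_refl D)).
    intros E HE' Hc. apply Hk; [eapply ext_trans; eauto | exact Hc].
Qed.

Lemma elim_tensor (f g : fm) (B : bs) K : supp (Tensor f g) B K -> elim (tc f g) B K.
Proof.
  intros H.
  change (forall C K0 p, extends B C -> (forall D, extends C D -> forall K',
     tcm f g D K' -> deriv D (K0 ++ K') p) -> deriv C (K ++ K0) p) in H.
  intros C HC M p Hk. apply H; auto. intros D HD K' Hm. apply Hk; auto. apply tc_iff; auto.
Qed.

Lemma tensor_intro (f g : fm) (B : bs) K :
  (forall C K0 p, extends B C -> (forall D, extends C D -> forall K',
     tc f g D K' -> deriv D (K0 ++ K') p) -> deriv C (K ++ K0) p) ->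
  supp (Tensor f g) B K.
Proof.
  intros H.
  change (forall C K0 p, extends B C -> (forall D, extends C D -> forall K',
     tcm f g D K' -> deriv D (K0 ++ K') p) -> deriv C (K ++ K0) p).
  intros C M p HC Hk. apply H; auto. intros D HD K' Hm. apply Hk; auto. apply tc_iff; auto.
Qed.

Lemma elim_plus (f g : fm) (B : bs) K : supp (Plus f g) B K ->
  elim (fun D K' => asupp f D K' \/ asupp g D K') B K.
Proof.
  intros H.
  change (forall C K0 p, extends B C ->
    (forall D, extends C D -> forall K', asupp f D K' -> deriv D (K0 ++ K') p) ->
    (forall D, extends C D -> forall K', asupp g D K' -> deriv D (K0 ++ K') p) ->
    deriv C (K ++ K0) p) in H.
  intros C HC M p Hk. apply H; auto.
Qed.

Lemma elim_one (B : bs) K : supp (One A) B K -> elim (fun D K' => K' = []) B K.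
Proof.
  intros H C HC M p Hk. apply H; auto. rewrite <- (app_nil_r M). apply Hk; auto. apply ext_refl.
Qed.

Lemma elim_bang (f : fm) (B : bs) K : supp (Bang f) B K -> elim (fun D K' => K' = [] /\ supp f D []) B K.
Proof.
  intros H C HC M p Hk. apply H; auto. intros D HD Hs. rewrite <- (app_nil_r M). apply Hk; auto.
Qed.

Lemma elim_zero (B : bs) K : supp (Zero A) B K -> elim (fun _ _ => False) B K.
Proof.
  intros H C HC M p _. exact (supp_mono HC H p M).
Qed.

Lemma supp_cut (f : fm) (C : bs) K : supp f C K -> forall chi L,
  (forall D, extends C D -> forall K', asupp f D K' -> supp chi D (L ++ K')) ->
  supp chi C (K ++ L).
Proof.
  intros H chi L HC. destruct f;
  try (eapply supp_perm; [apply (HC C (ext_refl C) K H) | apply Permutation_app_comm]).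
  apply lift with (P := fun D K' => K' = [] /\ supp f D []).
  - apply elim_bang; auto.
  - intros D HD K' HP. apply HC; auto.
Qed.

Fixpoint ctx (G : list fm) (C : bs) (K : list A) : Prop :=
  match G with
  | [] => K = []
  | g :: G' => exists K1 K2, Permutation K (K1 ++ K2) /\ asupp g C K1 /\ ctx G' C K2
  end.

Lemma ctx_mono G (B C : bs) K : extends B C -> ctx G B K -> ctx G C K.
Proof.
  intros HC. revert K. induction G; simpl; intros K H; auto.
  destruct H as [K1 [K2 [HP [H1 H2]]]]. exists K1, K2. split; auto. split; auto.
  eapply asupp_mono; eauto.
Qed.

Lemma ctx_app (G D : list fm) (C : bs) K : ctx (G ++ D) C K ->
  exists K1 K2, Permutation K (K1 ++ K2) /\ ctx G C K1 /\ ctx D C K2.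
Proof.
  revert K. induction G; simpl; intros K H.
  - exists [], K. simpl. auto.
  - destruct H as [A1 [A2 [HP [H1 H2]]]].
    destruct (IHG _ H2) as [B1 [B2 [HP' [H3 H4]]]].
    exists (A1 ++ B1), B2. split; [|split; auto].
    + rewrite <- app_assoc. eapply Permutation_trans; [exact HP|].
      apply Permutation_app_head; exact HP'.
    + exists A1, B1. split; auto.
Qed.
Arguments ctx_app {G D C K}.


Lemma ctx_swap (G G' : list fm) (C : bs) : Permutation G G' -> forall K, ctx G C K -> ctx G' C K.
Proof.
  intros HPm; induction HPm as [|x l l' HPl IHp|x y l|l l' l'' HP1 IH1 HP2 IH2];
    intros K H; simpl in *; auto.
  - destruct H as [K1 [K2 [HP [H1 H2]]]]. exists K1, K2; auto.
  - destruct H as [A1 [A2 [HP [H1 [B1 [B2 [HP' [H2 H3]]]]]]]].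
    exists B1, (A1 ++ B2). split.
    + eapply Permutation_trans; [exact HP|].
      eapply Permutation_trans; [apply Permutation_app_head; exact HP'|].
      apply Permutation_app_swap_app.
    + split; auto. exists A1, B2. auto.
Qed.

Definition V (G : list fm) (f : fm) : Prop := forall C K, ctx G C K -> supp f C K.

Lemma cut_ctx (f : fm) D (g : fm) (E : bs) K K2 : supp f E K -> ctx D E K2 -> V (f :: D) g -> supp g E (K ++ K2).
Proof.
  intros H Hc HV. apply supp_cut with (f := f); auto.
  intros D' HD K' Ha. apply HV. exists K', K2. split; [apply Permutation_app_comm|].
  split; auto. eapply ctx_mono; eauto.
Qed.

Lemma prom_aux ps : Forall (fun p => V (fst p) (Bang (snd p))) ps ->
  forall C K, ctx (concat (map fst ps)) C K -> forall chi L,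
  (forall D, extends C D -> Forall (fun p => supp (snd p) D []) ps -> supp chi D L) ->
  supp chi C (K ++ L).
Proof.
  induction 1 as [|x l Hx HF IH]; intros C K Hc chi L Hk.
  - simpl in Hc. subst. simpl. apply Hk; [apply ext_refl| constructor].
  - simpl in Hc. destruct (ctx_app Hc) as [K1 [K2 [HP [H1 H2]]]].
    apply (@supp_perm _ _ (K1 ++ (K2 ++ L)));
      [| rewrite app_assoc; apply Permutation_app_tail; symmetry; auto].
    apply lift with (P := fun D K' => K' = [] /\ supp (snd x) D []).
    + apply elim_bang. apply Hx; auto.
    + intros D HD K' [-> Hs]. rewrite app_nil_r. apply IH.
      * eapply ctx_mono; eauto.
      * intros E HE HF'. apply Hk; [eapply ext_trans; eauto|].
        constructor; auto. eapply supp_mono; eauto.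
Qed.

Lemma ctx_map_bang (ps : list (list fm * fm)) D :
  Forall (fun p => supp (snd p) D []) ps -> ctx (map (fun p => Bang (snd p)) ps) D [].
Proof.
  induction 1; simpl; auto. exists [], []. simpl. split; auto.
Qed.

Ltac split_ctx Hc := let K1 := fresh "K1" in let K2 := fresh "K2" in
  let HP := fresh "HP" in let H1 := fresh "H1" in let H2 := fresh "H2" in
  destruct (ctx_app Hc) as [K1 [K2 [HP [H1 H2]]]];
  apply (@supp_perm _ _ (K1 ++ K2)); [| symmetry; exact HP].

Lemma soundV : forall G f, nd G f -> V G f.
Proof.
  fix IH 3. intros G0 f0 d0.
  destruct d0 as [G G' f HPm d | f | G f g d | G D f g d1 d2 | G D f g d1 d2
    | G D f g h d1 d2 | | G D f d1 d2 | G f g d1 d2 | G f g d | G f g d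
    | G f g d | G f g d | G D f g h d1 d2 d3 | ps HF | ps D h HF d | ps f HF d
    | G D f g d1 d2 | G D f g d1 d2 | G D f g d1 d2 ].
  - intros C K Hc. apply (IH _ _ d). apply ctx_swap with G'; auto.
    apply Permutation_sym; auto.
  - intros C K [K1 [K2 [HP [Ha ->]]]]. apply asupp_supp.
    eapply asupp_perm; [exact Ha|]. rewrite app_nil_r in HP. symmetry; auto.
  - intros C K Hc.
    change (forall C', extends C C' -> forall M, asupp f C' M -> supp g C' (K ++ M)).
    intros C' HC' M Ha. apply (IH _ _ d). exists M, K.
    split; [apply Permutation_app_comm|]. split; auto. eapply ctx_mono; eauto.
  - intros C K Hc. split_ctx Hc.
    pose proof (IH _ _ d1 C K1 H1) as h1. pose proof (IH _ _ d2 C K2 H2) as h2.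
    change (forall C', extends C C' -> forall M, asupp f C' M -> supp g C' (K1 ++ M)) in h1.
    apply (@supp_perm _ _ (K2 ++ K1)); [|apply Permutation_app_comm].
    apply supp_cut with (f := f); auto.
  - intros C K Hc. split_ctx Hc.
    pose proof (IH _ _ d1 C K1 H1) as h1. pose proof (IH _ _ d2 C K2 H2) as h2.
    apply tensor_intro. intros C' M p HC' Hk.
    change (supp (Atom p) C' ((K1 ++ K2) ++ M)). rewrite <- app_assoc.
    apply supp_cut with (f := f); [eapply supp_mono; eauto|].
    intros D0 HD K' Ha. simpl.
    apply (@deriv_perm _ (K2 ++ (M ++ K'))); [| rewrite app_assoc; apply Permutation_refl].
    change (supp (Atom p) D0 (K2 ++ (M ++ K'))).
    apply supp_cut with (f := g); [eapply supp_mono; [|exact h2]; eapply ext_trans; eauto|].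
    intros E HE K'' Hb. simpl. rewrite <- app_assoc. apply Hk; [eapply ext_trans; eauto|].
    exists K', K''. split; [reflexivity|]. split; auto. eapply asupp_mono; eauto.
  - intros C K Hc. split_ctx Hc.
    pose proof (IH _ _ d1 C K1 H1) as h1.
    apply lift with (P := tc f g); [apply elim_tensor; auto|].
    intros E HE K' [A1 [A2 [HP' [Ha1 Ha2]]]]. apply (IH _ _ d2).
    exists A1, (A2 ++ K2). split.
    + eapply Permutation_trans; [apply Permutation_app_comm|].
      rewrite app_assoc. apply Permutation_app_tail. exact HP'.
    + split; auto. exists A2, K2. split; [reflexivity|]. split; auto.
      eapply ctx_mono; eauto.
  - intros C K Hc. simpl in Hc. subst. intros C' K p _ Hd. exact Hd.
  - intros C K Hc. split_ctx Hc.
    apply lift with (P := fun D K' => K' = []); [apply elim_one; apply (IH _ _ d1); auto|].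
    intros E HE K' ->. rewrite app_nil_r. apply (IH _ _ d2). eapply ctx_mono; eauto.
  - intros C K Hc. split; [apply (IH _ _ d1) | apply (IH _ _ d2)]; auto.
  - intros C K Hc. destruct (IH _ _ d C K Hc); auto.
  - intros C K Hc. destruct (IH _ _ d C K Hc); auto.
  - intros C K Hc. pose proof (IH _ _ d C K Hc) as h.
    change (forall C' K0 p, extends C C' ->
      (forall D, extends C' D -> forall K', asupp f D K' -> deriv D (K0 ++ K') p) ->
      (forall D, extends C' D -> forall K', asupp g D K' -> deriv D (K0 ++ K') p) ->
      deriv C' (K ++ K0) p).
    intros C' M p HC' Hk1 Hk2. change (supp (Atom p) C' (K ++ M)).
    apply supp_cut with (f := f); [eapply supp_mono; eauto|]. exact Hk1.
  - intros C K Hc. pose proof (IH _ _ d C K Hc) as h.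
    change (forall C' K0 p, extends C C' ->
      (forall D, extends C' D -> forall K', asupp f D K' -> deriv D (K0 ++ K') p) ->
      (forall D, extends C' D -> forall K', asupp g D K' -> deriv D (K0 ++ K') p) ->
      deriv C' (K ++ K0) p).
    intros C' M p HC' Hk1 Hk2. change (supp (Atom p) C' (K ++ M)).
    apply supp_cut with (f := g); [eapply supp_mono; eauto|]. exact Hk2.
  - intros C K Hc. split_ctx Hc.
    apply lift with (P := fun D K' => asupp f D K' \/ asupp g D K');
      [apply elim_plus; apply (IH _ _ d1); auto|].
    intros E HE K' [Ha|Ha]; [apply (IH _ _ d2) | apply (IH _ _ d3)];
      exists K', K2; (split; [apply Permutation_app_comm|]); split; auto;
      eapply ctx_mono; eauto.
  - intros C K _. exact I.
  - intros C K Hc. split_ctx Hc.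
    apply (@supp_perm _ _ (K2 ++ K1)); [|apply Permutation_app_comm].
    apply lift with (P := fun _ _ => False); [apply elim_zero; apply (IH _ _ d); auto|].
    intros; contradiction.
  -
    assert (HV : Forall (fun p => V (fst p) (Bang (snd p))) ps).
    { clear - IH HF. revert ps HF. fix F 2. intros ps HF.
      destruct HF as [|x l Hx Hl]; constructor; [apply IH; exact Hx | apply F; exact Hl]. }
    pose proof (IH _ _ d) as Hf. clear IH d HF.
    intros C K Hc. rewrite <- (app_nil_r K). apply prom_aux with ps; auto.
    intros D HD Hall. apply bang_intro. apply Hf. apply ctx_map_bang; auto.
  - intros C K Hc. split_ctx Hc.
    apply lift with (P := fun D K' => K' = [] /\ supp f D []);
      [apply elim_bang; apply (IH _ _ d1); auto|].
    intros E HE K' [-> Hs]. rewrite app_nil_r.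
    change K2 with ([] ++ K2). pose proof (IH _ _ d2) as Hv.
    apply cut_ctx with (f := f) (D := D); [exact Hs | eapply ctx_mono; eauto | exact Hv].
  - intros C K Hc. split_ctx Hc.
    apply lift with (P := fun D K' => K' = [] /\ supp f D []);
      [apply elim_bang; apply (IH _ _ d1); auto|].
    intros E HE K' [-> Hs]. rewrite app_nil_r. apply (IH _ _ d2). eapply ctx_mono; eauto.
  - intros C K Hc. split_ctx Hc.
    apply lift with (P := fun D K' => K' = [] /\ supp f D []);
      [apply elim_bang; apply (IH _ _ d1); auto|].
    intros E HE K' [-> Hs]. rewrite app_nil_r. apply (IH _ _ d2).
    exists [], K2. split; [reflexivity|]. split; [exact (conj eq_refl Hs)|].
    exists [], K2. split; [reflexivity|]. split; [exact (conj eq_refl Hs)|].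
    eapply ctx_mono; eauto.
Qed.


Fixpoint ms (Th : list fm) (C : bs) (K : list A) : Prop :=
  match Th with
  | [] => K = []
  | t :: Th' => exists K1 K2, Permutation K (K1 ++ K2) /\ supp t C K1 /\ ms Th' C K2
  end.

Lemma supp_ms_ms (Th : list fm) (C : bs) K : supp_ms Th C K -> ms Th C K.
Proof.
  revert K. induction Th as [|t Th IHt]; intros K H; simpl in *; auto.
  destruct Th as [|t' Th'].
  - exists K, []. rewrite app_nil_r. split; [apply Permutation_refl| split; [exact H| reflexivity]].
  - simpl in H. destruct H as [K1 [K2 [HP [H1 H2]]]]. exists K1, K2. auto.
Qed.

Lemma ms_ctx (G : list fm) (C : bs) K : (forall d, In (Bang d) G -> supp d C []) ->
  ms (filter (fun g => negb (is_bang g)) G) C K -> ctx G C K.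
Proof.
  revert K. induction G as [|g G IHG]; intros K Hb H; simpl in *; auto.
  destruct g; simpl in H;
  try (destruct H as [K1 [K2 [HP [H1 H2]]]]; exists K1, K2;
       split; [exact HP | split; [exact H1| apply IHG; [intros d0 Hd0; apply Hb; right; exact Hd0 | exact H2]]]).
  exists [], K. split; [apply Permutation_refl|].
  split; [exact (conj eq_refl (Hb g (or_introl eq_refl)))|].
  apply IHG; [intros d0 Hd0; apply Hb; right; exact Hd0 | exact H].
Qed.

Lemma V_valid (G : list fm) (f : fm) : V G f -> valid G f.
Proof.
  intros HV B. unfold seq_supp. destruct G as [|g G].
  - apply HV. reflexivity.
  - intros C HC K Hb Hm. apply HV. apply ms_ctx; auto. apply supp_ms_ms; auto.
Qed.

End S.

Theorem theorem6 (A : Type) (G : list (formula A)) (f : formula A) :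
  nd G f -> valid G f.
Proof.
  intros H. apply V_valid. apply soundV. exact H.
Qed.
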